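(* Let $n\ge 3$ and let $S_n$ be the monoid defined below. Every element $a\in S_n$ can be written uniquely as a product $$a=a_1^{i}\,(a_1a_2\cdots a_n)^{\varepsilon}\,(a_2a_3\cdots a_n)^{j}\,b,$$ where $\varepsilon\in\{0,1\}$, $i,j$ are non-negative integers, $b\in S_n\setminus\bigl(a_1S_n\cup (a_2a_3\cdots a_n)S_n\bigr)$, and the following condition holds: if $j\ge 1$ then $\varepsilon=1$ or $i=0$. (Uniqueness means: the triple $(i,\varepsilon,j)$ and the element $b\in S_n$ are uniquely determined by $a$.)
   Context: For $n\ge 3$, $S_n$ denotes the monoid with generators $a_1,\dots,a_n$ and defining relations $a_1a_2\cdots a_n=a_{\sigma(1)}a_{\sigma(2)}\cdots a_{\sigma(n)}$ for all $\sigma$ in the cyclic subgroup of the symmetric group $\operatorname{Sym}_n$ generated by the cycle $(1,2,\dots,n)$; equivalently, $a_1a_2\cdots a_n=a_{k+1}\cdots a_na_1\cdots a_k$ for $k=1,\dots,n-1$. *)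

(* Defs.v *)
(* The monoid S_n is modelled as words over the alphabet 'I_n
   (letter k stands for generator a_{k+1}) modulo the monoid congruence
   generated by the defining relations. *)
From Stdlib Require Import Relations.
From mathcomp Require Import all_boot.
Set Implicit Arguments. Unset Strict Implicit. Unset Printing Implicit Defensive.

Definition wfull (n : nat) : seq 'I_n := enum 'I_n.
Definition wa1 (n : nat) : seq 'I_n := take 1 (wfull n).
Definition wtail (n : nat) : seq 'I_n := behead (wfull n).

Definition wpow (n : nat) (w : seq 'I_n) (k : nat) : seq 'I_n := flatten (nseq k w).

(* one application of a defining relation a_1...a_n = a_{k+1}...a_n a_1...a_k
   inside a word (rot k gives exactly this rotation; k = 0 or k >= n is trivial) *)
Inductive Sstep (n : nat) : seq 'I_n -> seq 'I_n -> Prop :=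
| Sstep_rel (u v : seq 'I_n) (k : nat) :
    Sstep (u ++ wfull n ++ v) (u ++ rot k (wfull n) ++ v).

Definition Seq (n : nat) : relation (seq 'I_n) := clos_refl_sym_trans _ (@Sstep n).

Definition in_rideal (n : nat) (p x : seq 'I_n) : Prop := exists w, Seq x (p ++ w).

Definition nf (n : nat) (i : nat) (e : bool) (j : nat) (b : seq 'I_n) : seq 'I_n :=
  wpow (wa1 n) i ++ (if e then wfull n else [::]) ++ wpow (wtail n) j ++ b.

Definition nf_ok (n : nat) (i : nat) (e : bool) (j : nat) (b : seq 'I_n) : Prop :=
  ~ in_rideal (wa1 n) b /\ ~ in_rideal (wtail n) b /\ (1 <= j -> e \/ i = 0).

(* Main.v *)
Require Import Defs.
From Stdlib Require Import Relations Lia Classical.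
From mathcomp Require Import all_boot.
Set Implicit Arguments. Unset Strict Implicit. Unset Printing Implicit Defensive.

Definition L (n' a : nat) : 'I_n'.+1 := inord (a %% n'.+1).
Fixpoint run (n' : nat) (d k : nat) : seq 'I_n'.+1 :=
  if k is k'.+1 then L n' d :: run n' d.+1 k' else [::].
Definition win n' (t : seq 'I_n'.+1) : bool := [exists x : 'I_n'.+1, t == run n' x n'.+1].
Definition step n' (c : 'I_n'.+1) (s : seq 'I_n'.+1) :=
  if win (take n'.+1 (c :: s)) then drop n'.+1 (c :: s) else c :: s.
Definition rho n' (x : seq 'I_n'.+1) := foldr (@step n') [::] x.
Definition hne n' (x : 'I_n'.+1) (s : seq 'I_n'.+1) : bool :=
  if s is y :: _ then y != x else true.

Lemma val_L n' a : nat_of_ord (L n' a) = a %% n'.+1.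
Proof. by rewrite /L inordK // ltn_pmod. Qed.

Lemma val_L2 n' a : val (L n' a) = a %% n'.+1.
Proof. exact: val_L. Qed.

Lemma L_eq n' a b : a %% n'.+1 = b %% n'.+1 -> L n' a = L n' b.
Proof. by rewrite /L => ->. Qed.

Lemma L_inj n' a b : L n' a = L n' b -> a %% n'.+1 = b %% n'.+1.
Proof. by move=> /(congr1 val); rewrite !val_L2. Qed.

Lemma Lval n' (c : 'I_n'.+1) : L n' c = c.
Proof. by rewrite /L modn_small // inord_val. Qed.

Lemma modS_eq n a b : a %% n = b %% n -> a.+1 %% n = b.+1 %% n.
Proof. by move=> H; rewrite -(addn1 a) -(addn1 b) -modnDml H modnDml. Qed.

Lemma run_mod n' a b k : a %% n'.+1 = b %% n'.+1 -> run n' a k = run n' b k.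
Proof.
elim: k a b => [//|k IH] a b H /=.
by rewrite (L_eq H) (IH a.+1 b.+1) // (modS_eq H).
Qed.

Lemma run_add n' d a b : run n' d (a + b) = run n' d a ++ run n' (d + a) b.
Proof.
elim: a d => [|a IH] d /=; first by rewrite addn0.
by rewrite IH addSnnS.
Qed.

Lemma size_run n' d k : size (run n' d k) = k.
Proof. by elim: k d => [//|k IH] d /=; rewrite IH. Qed.

Lemma map_val_run n' d k : d + k <= n'.+1 -> map val (run n' d k) = iota d k.
Proof.
elim: k d => [//|k IH] d /= H.
rewrite val_L2 modn_small; last by rewrite (leq_trans _ H) // -addSnnS leq_addr.
by rewrite IH // addSnnS.
Qed.

Lemma wfullE n' : wfull n'.+1 = run n' 0 n'.+1.
Proof.
apply: (@inj_map _ _ val val_inj).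
by rewrite /wfull val_enum_ord map_val_run.
Qed.

Lemma wa1E n' : wa1 n'.+1 = [:: L n' 0].
Proof. by rewrite /wa1 wfullE /= take0. Qed.

Lemma wtailE n' : wtail n'.+1 = run n' 1 n'.
Proof. by rewrite /wtail wfullE. Qed.

Lemma wfull_cat n' : wfull n'.+1 = wa1 n'.+1 ++ wtail n'.+1.
Proof. by rewrite wa1E wtailE wfullE. Qed.

Lemma rot_run n' x : rot (x %% n'.+1) (run n' 0 n'.+1) = run n' x n'.+1.
Proof.
set k := x %% n'.+1.
have hk : k <= n'.+1 by rewrite ltnW // ltn_pmod.
have E1 : run n' 0 n'.+1 = run n' 0 k ++ run n' k (n'.+1 - k).
  by rewrite -run_add subnKC.
have E2 : run n' x n'.+1 = run n' k (n'.+1 - k) ++ run n' 0 k.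
  rewrite (@run_mod n' x k); last by rewrite modn_mod.
  transitivity (run n' k ((n'.+1 - k) + k)); first by rewrite subnK.
  rewrite run_add addnC subnK //.
  by rewrite (@run_mod n' n'.+1 0) // modnn mod0n.
by rewrite E1 E2 /rot drop_size_cat ?size_run // take_size_cat ?size_run.
Qed.

Lemma rot_wfull n' k : exists x, rot k (wfull n'.+1) = run n' x n'.+1.
Proof.
case: (ltnP k n'.+1) => hk.
  by exists k; rewrite wfullE -{1}(@modn_small k n'.+1) // rot_run.
by exists 0; rewrite rot_oversize ?wfullE // size_run.
Qed.

Lemma win_run n' x : win (run n' x n'.+1).
Proof.
apply/existsP; exists (Ordinal (ltn_pmod x (ltn0Sn n'))).
by apply/eqP; apply: run_mod; rewrite /= modn_mod.
Qed.

Lemma winP n' t : win t -> exists x, t = run n' x n'.+1.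
Proof. by case/existsP=> x /eqP ->; exists x. Qed.

Lemma SmodE n m : m.+1 %% n = (m %% n).+1 %% n.
Proof. by apply: modS_eq; rewrite modn_mod. Qed.

Lemma run_sub n' e k : k <= n'.+1 ->
  run n' e n'.+1 = run n' e k ++ run n' (e + k) (n'.+1 - k).
Proof.
move=> hk; transitivity (run n' e (k + (n'.+1 - k))); first by rewrite subnKC.
by rewrite run_add.
Qed.

Lemma stepB n' x k s0 : k < n'.+1 -> hne (L n' (x.+1 + k)) s0 ->
  step (L n' x) (run n' x.+1 k ++ s0) =
  if k.+1 == n'.+1 then s0 else run n' x k.+1 ++ s0.
Proof.
move=> hk hh; rewrite /step.
have -> : L n' x :: run n' x.+1 k ++ s0 = run n' x k.+1 ++ s0 by [].
case: eqP => [ek|nek].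
  by rewrite ek take_size_cat ?size_run // win_run drop_size_cat ?size_run.
have hk1 : k.+1 < n'.+1 by rewrite ltn_neqAle hk andbT; apply/eqP.
case: ifP => // hw; exfalso.
move/winP: hw => [e He].
have ET : take n'.+1 (run n' x k.+1 ++ s0) = run n' x k.+1 ++ take (n'.+1 - k.+1) s0.
  by rewrite take_cat size_run ltnNge (ltnW hk1).
rewrite ET (run_sub e (ltnW hk1)) in He.
move/eqP: He; rewrite eqseq_cat ?size_run // => /andP[/eqP H1 /eqP H2].
have Hxe : x %% n'.+1 = e %% n'.+1 by case: H1 => /L_inj.
move: H2; rewrite -(subnSK hk1) /=.
clear ET; case: s0 hh => [//|y s1] /= hh [Hy _].
move: hh; rewrite Hy (@L_eq n' (e + k.+1) (x.+1 + k)) ?eqxx //.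
by rewrite addSnnS -modnDml -Hxe modnDml.
Qed.

Lemma pushC n' Ln : forall x m s0, m < n'.+1 -> hne (L n' (x + Ln + m)) s0 ->
  exists f, foldr (@step n') (run n' (x + Ln) m ++ s0) (run n' x Ln)
            = run n' f ((m + Ln) %% n'.+1) ++ s0
         /\ (f + (m + Ln) %% n'.+1) %% n'.+1 = (x + Ln + m) %% n'.+1.
Proof.
elim: Ln => [|Ln IH] x m s0 hm hh.
  by exists x; rewrite !addn0 modn_small.
have e1 : x.+1 + Ln = x + Ln.+1 by rewrite addSnnS.
have hh' : hne (L n' (x.+1 + Ln + m)) s0 by rewrite e1.
have [f [Ef Cf]] := IH x.+1 m s0 hm hh'.
rewrite /= -e1 Ef.
set k := (m + Ln) %% n'.+1.
have Ek : (x.+1 + k) %% n'.+1 = (x + Ln.+1 + m) %% n'.+1.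
  by rewrite modnDmr -e1 (addnC m) addnA.
have Ef2 : run n' f k = run n' x.+1 k.
  apply: run_mod; apply/eqP; rewrite -(eqn_modDr k) Cf Ek e1.
  done.
have hk : k < n'.+1 by rewrite ltn_pmod.
have hh2 : hne (L n' (x.+1 + k)) s0 by rewrite (L_eq Ek).
have Emk : (m + Ln.+1) %% n'.+1 = k.+1 %% n'.+1 by rewrite addnS SmodE.
have Ex : x.+1 + Ln + m = x + (m + Ln).+1 by rewrite -!plusE; lia.
rewrite Ef2 stepB //; case: eqP => ek.
  exists x; rewrite Emk ek modnn addn0 /=; split => //.
  by rewrite Ex -[RHS]modnDmr (SmodE _ (m + Ln)) -/k ek modnn addn0.
have hk1 : k.+1 < n'.+1 by rewrite ltn_neqAle hk andbT; apply/eqP.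
exists x; rewrite Emk (modn_small hk1); split => //.
by rewrite Ex -[RHS]modnDmr (SmodE _ (m + Ln)) -/k (modn_small hk1).
Qed.

Lemma decomp n' K : forall s x, exists m s0, m <= K /\ s = run n' x m ++ s0 /\
   (m = K \/ hne (L n' (x + m)) s0).
Proof.
elim: K => [|K IH] s x.
  by exists 0, s; split => //; split => //; left.
case: s => [|y s'].
  by exists 0, [::]; split => //; split => //; right.
case: (eqVneq y (L n' x)) => hy.
  have [m [s0 [hm [Es Hm]]]] := IH s' x.+1.
  exists m.+1, s0; split => //; split; first by rewrite /= Es hy.
  by case: Hm => [->|Hm]; [left|right; rewrite -addSnnS].
by exists 0, (y :: s'); split => //; split => //; right; rewrite addn0 /= hy.
Qed.

Definition inv n' (s : seq 'I_n'.+1) := forall j, ~~ win (take n'.+1 (drop j s)).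

Lemma win_nil n' : ~~ win (n' := n') [::].
Proof. by apply/negP => /winP [x] /(congr1 size); rewrite size_run. Qed.

Lemma inv_nil n' : inv (n' := n') [::].
Proof. by move=> j; rewrite drop_oversize // win_nil. Qed.

Lemma inv_step n' c s : inv s -> inv (@step n' c s).
Proof.
move=> hs j; rewrite /step; case: ifP => hw.
  by rewrite drop_drop addnS /= hs.
by case: j => [|j] /=; [rewrite hw | exact: hs].
Qed.

Lemma inv_rho n' x : inv (rho (n' := n') x).
Proof. by elim: x => [|c x IH]; [exact: inv_nil | exact: inv_step]. Qed.

Lemma pushA n' x s : inv s -> foldr (@step n') s (run n' x n'.+1) = s.
Proof.
move=> hs.
have [m [s0 [hm [Es Hm]]]] := decomp n'.+1 s x.
case: Hm => [em|hh].
  move: (hs 0); rewrite drop0 Es em take_size_cat ?size_run //.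
  by rewrite win_run.
have hmn : m < n'.+1.
  rewrite ltn_neqAle hm andbT; apply/eqP => em.
  by move: hh (hs 0); rewrite drop0 Es em take_size_cat ?size_run // win_run.
have E1 : run n' x m = run n' (x + n'.+1) m by apply: run_mod; rewrite modnDr.
have hh' : hne (L n' (x + n'.+1 + m)) s0.
  by rewrite (@L_eq n' _ (x + m)) // -addnA (addnC _ m) addnA modnDr.
have [f [Ef Cf]] := pushC hmn hh'.
move: Ef Cf; rewrite modnDr modn_small // => Ef Cf.
rewrite Es E1 Ef; congr (_ ++ _); apply: run_mod.
apply/eqP; rewrite -(eqn_modDr m) Cf.
done.
Qed.

Lemma rho_win n' u x v :
  rho (n' := n') (u ++ run n' x n'.+1 ++ v) = rho (u ++ v).
Proof. by rewrite /rho !foldr_cat pushA //; apply: inv_rho. Qed.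

Lemma Sstep_ctx n (u v x y : seq 'I_n) : Sstep x y -> Sstep (u ++ x ++ v) (u ++ y ++ v).
Proof.
case=> u' v' k.
by have := Sstep_rel (u ++ u') (v' ++ v) k; rewrite !catA.
Qed.

Lemma Seq_ctx n (u v x y : seq 'I_n) : Seq x y -> Seq (u ++ x ++ v) (u ++ y ++ v).
Proof.
elim=> [x' y' H|x'|x' y' _ IH|x' y' z' _ IH1 _ IH2].
- by apply: rst_step; apply: Sstep_ctx.
- exact: rst_refl.
- exact: rst_sym.
- exact: rst_trans IH2.
Qed.

Lemma Seq_refl n (x : seq 'I_n) : Seq x x.
Proof. exact: rst_refl. Qed.
Lemma Seq_sym n (x y : seq 'I_n) : Seq x y -> Seq y x.
Proof. exact: rst_sym. Qed.
Lemma Seq_trans n (x y z : seq 'I_n) : Seq x y -> Seq y z -> Seq x z.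
Proof. exact: rst_trans. Qed.

Lemma Seq_inv n T (f : seq 'I_n -> T) :
  (forall x y, Sstep x y -> f x = f y) -> forall x y, Seq x y -> f x = f y.
Proof.
move=> Hf x y; elim=> [x' y' H|x'|x' y' _ IH|x' y' z' _ IH1 _ IH2] //.
- exact: Hf.
- by rewrite IH1.
Qed.

Lemma Seq_rho n' (x y : seq 'I_n'.+1) : Seq x y -> rho x = rho y.
Proof.
apply: Seq_inv => {}x {}y [u v k].
have [z Ez] := rot_wfull n' k.
by rewrite Ez wfullE !rho_win.
Qed.

Lemma Seq_size n (x y : seq 'I_n) : Seq x y -> size x = size y.
Proof.
apply: Seq_inv => {}x {}y [u v k].
by rewrite (size_cat u (wfull n ++ v)) (size_cat u (rot k (wfull n) ++ v))
  (size_cat (wfull n)) (size_cat (rot k (wfull n))) size_rot.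
Qed.

Lemma Seq_win n' u x v :
  Seq (u ++ run n' x n'.+1 ++ v) (u ++ wfull n'.+1 ++ v).
Proof.
apply: rst_sym; apply: rst_step.
have := Sstep_rel u v (x %% n'.+1).
by rewrite wfullE rot_run.
Qed.

Lemma Seq_letter n' (c : 'I_n'.+1) : Seq (c :: wfull n'.+1) (wfull n'.+1 ++ [:: c]).
Proof.
apply: (@Seq_trans _ _ (run n' c n'.+1 ++ [:: c])); last first.
  by have := Seq_win [::] c [:: c].
have E : c :: run n' c.+1 n'.+1 = run n' c n'.+1 ++ [:: c].
  transitivity (run n' c (n'.+1 + 1)); first by rewrite addn1 /= Lval.
  rewrite run_add /=.
  by rewrite (@L_eq n' _ c) ?Lval // modnDr.
rewrite -E; have := Seq_win [:: c] c.+1 [::].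
rewrite !cats0 => H; apply: Seq_sym.
by rewrite -[c :: run _ _ _]/([:: c] ++ _); exact: H.
Qed.

Lemma Seq_central n' (u : seq 'I_n'.+1) : Seq (u ++ wfull n'.+1) (wfull n'.+1 ++ u).
Proof.
elim: u => [|c u IH] /=; first by rewrite cats0; apply: Seq_refl.
apply: (@Seq_trans _ _ (c :: wfull n'.+1 ++ u)).
  by have := Seq_ctx [:: c] [::] IH; rewrite /= !cats0.
have := Seq_ctx [::] u (Seq_letter c).
by rewrite /= -catA.
Qed.

Lemma wpowS n (w : seq 'I_n) k : wpow w k.+1 = w ++ wpow w k.
Proof. by []. Qed.

Lemma wpowSr n (w : seq 'I_n) k : wpow w k.+1 = wpow w k ++ w.
Proof.
elim: k => [|k IH]; first by rewrite /wpow /= cats0.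
by rewrite [LHS]wpowS [in LHS]IH catA.
Qed.

Lemma size_wpow n (w : seq 'I_n) k : size (wpow w k) = k * size w.
Proof. by elim: k => [|k IH] //; rewrite wpowS size_cat IH mulSn. Qed.

Lemma L01 n' : 1 <= n' -> L n' 0 != L n' 1.
Proof.
move=> h; apply/negP => /eqP /L_inj.
by rewrite mod0n modn_small // ltnS.
Qed.

Lemma stepA n' s : 1 <= n' -> take n' s != run n' 1 n' ->
  step (L n' 0) s = L n' 0 :: s /\ take n' (L n' 0 :: s) != run n' 1 n'.
Proof.
move=> h1 hs; split.
  rewrite /step /=; case: ifP => // /winP [e He]; exfalso.
  case: He => /L_inj He He2; move/negP: hs; apply.
  by rewrite He2; apply/eqP; apply: run_mod; apply: modS_eq.
rewrite -[X in take X _](prednK h1) -[X in run _ _ X](prednK h1) /=.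
by rewrite eqseq_cons negb_and L01.
Qed.

Lemma push_A n' p s : 1 <= n' -> take n' s != run n' 1 n' ->
  foldr (@step n') s (wpow [:: L n' 0] p) = wpow [:: L n' 0] p ++ s /\
  take n' (wpow [:: L n' 0] p ++ s) != run n' 1 n'.
Proof.
move=> h1 hs; elim: p => [|p [IH1 IH2]] //.
rewrite wpowS /= IH1.
by have [-> ->] := stepA h1 IH2.
Qed.

Lemma push_T1 n' s : 1 <= n' -> hne (L n' 0) s ->
  foldr (@step n') s (run n' 1 n') = run n' 1 n' ++ s.
Proof.
move=> h1 hs.
have hh : hne (L n' (1 + n' + 0)) s.
  by rewrite (@L_eq n' _ 0) // addn0 add1n modnn mod0n.
have [f [Ef Cf]] := @pushC n' n' 1 0 s (ltn0Sn _) hh.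
move: Ef Cf; rewrite /= add0n (modn_small (ltnSn n')) => Ef Cf.
rewrite Ef; congr (_ ++ _); apply: run_mod.
by apply/eqP; rewrite -(eqn_modDr n') Cf addn0.
Qed.

Lemma push_T n' q s : 1 <= n' -> hne (L n' 0) s ->
  foldr (@step n') s (wpow (run n' 1 n') q) = wpow (run n' 1 n') q ++ s.
Proof.
move=> h1 hs; elim: q => [|q IH] //.
rewrite wpowS foldr_cat IH push_T1 ?catA //.
case: q {IH} => [|q]; first by [].
rewrite wpowS -[X in run _ _ X](prednK h1) /=.
by rewrite eq_sym L01.
Qed.

Lemma rho_id_or n' (b : seq 'I_n'.+1) :
  rho b = b \/ exists j, win (take n'.+1 (drop j b)).
Proof.
elim: b => [|c b [IH|[j Hj]]]; first by left.
- rewrite /rho /= -/(rho b) IH /step.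
  by case: ifP => hw; [right; exists 0 | left].
- by right; exists j.+1.
Qed.

Lemma nfb_hne n' (b : seq 'I_n'.+1) : ~ in_rideal (wa1 n'.+1) b -> hne (L n' 0) b.
Proof.
case: b => [//|y b'] /= H; apply/negP => /eqP Ey; apply: H.
by exists b'; rewrite wa1E Ey; apply: Seq_refl.
Qed.

Lemma nfb_take n' (b : seq 'I_n'.+1) : ~ in_rideal (wtail n'.+1) b -> take n' b != run n' 1 n'.
Proof.
move=> H; apply/negP => /eqP E; apply: H.
by exists (drop n' b); rewrite wtailE -E cat_take_drop; apply: Seq_refl.
Qed.

Lemma Seq_central2 n' (u v : seq 'I_n'.+1) :
  Seq (u ++ wfull n'.+1 ++ v) (wfull n'.+1 ++ u ++ v).
Proof.
by have := Seq_ctx [::] v (Seq_central u); rewrite /= -!catA.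
Qed.

Lemma nfb_rho n' (b : seq 'I_n'.+1) : ~ in_rideal (wa1 n'.+1) b -> rho b = b.
Proof.
move=> H; case: (rho_id_or b) => // [[j /winP [x Hx]]]; exfalso; apply: H.
have Eb : b = take j b ++ run n' x n'.+1 ++ drop n'.+1 (drop j b).
  by rewrite -Hx !cat_take_drop.
exists (wtail n'.+1 ++ take j b ++ drop n'.+1 (drop j b)).
rewrite catA -wfull_cat; rewrite {1}Eb.
apply: Seq_trans (Seq_win _ _ _) _.
exact: Seq_central2.
Qed.

Lemma hne_T n' q (b : seq 'I_n'.+1) : 1 <= n' -> hne (L n' 0) b ->
  hne (L n' 0) (wpow (run n' 1 n') q ++ b).
Proof.
move=> h1 hb; case: q => [//|q].
by rewrite wpowS -[X in run _ _ X](prednK h1) /= eq_sym L01.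
Qed.

Lemma UA n' p : forall p' (X X' : seq 'I_n'.+1), hne (L n' 0) X -> hne (L n' 0) X' ->
  wpow [:: L n' 0] p ++ X = wpow [:: L n' 0] p' ++ X' -> p = p' /\ X = X'.
Proof.
elim: p => [|p IH] [|p'] X X' hX hX' //=.
- by move=> E; move: hX; rewrite E /= eqxx.
- by move=> E; move: hX'; rewrite -E /= eqxx.
- move=> [E].
  by have [-> ->] := IH p' X X' hX hX' E.
Qed.

Lemma UT n' q : forall q' (Y Y' : seq 'I_n'.+1),
  take n' Y != run n' 1 n' -> take n' Y' != run n' 1 n' ->
  wpow (run n' 1 n') q ++ Y = wpow (run n' 1 n') q' ++ Y' -> q = q' /\ Y = Y'.
Proof.
elim: q => [|q IH] [|q'] Y Y' hY hY' //=.
- move=> E; move: hY; rewrite E wpowS -catA take_size_cat ?size_run //.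
  by rewrite eqxx.
- move=> E; move: hY'; rewrite -E wpowS -catA take_size_cat ?size_run //.
  by rewrite eqxx.
- rewrite !wpowS -!catA => /eqP; rewrite eqseq_cat // => /andP[_ /eqP E].
  by have [-> ->] := IH q' Y Y' hY hY' E.
Qed.

Lemma rho_catl n' (X Y : seq 'I_n'.+1) : rho (X ++ Y) = foldr (@step n') (rho Y) X.
Proof. by rewrite /rho foldr_cat. Qed.

Lemma N2 n' p q (b : seq 'I_n'.+1) : 1 <= n' -> (p = 0 \/ q = 0) ->
  hne (L n' 0) b -> take n' b != run n' 1 n' -> rho b = b ->
  rho (wpow [:: L n' 0] p ++ wpow (run n' 1 n') q ++ b)
   = wpow [:: L n' 0] p ++ wpow (run n' 1 n') q ++ b.
Proof.
move=> h1 [->|->] hb1 hb2 hb /=.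
  by rewrite rho_catl hb push_T.
by rewrite rho_catl hb; have [-> _] := push_A p h1 hb2.
Qed.

Lemma rho_red n' i j (c : seq 'I_n'.+1) :
  rho (wpow [:: L n' 0] i.+1 ++ wpow (run n' 1 n') j.+1 ++ c)
  = rho (wpow [:: L n' 0] i ++ wpow (run n' 1 n') j ++ c).
Proof.
rewrite wpowSr wpowS -!catA.
have -> : [:: L n' 0] ++ run n' 1 n' ++ wpow (run n' 1 n') j ++ c
   = run n' 0 n'.+1 ++ wpow (run n' 1 n') j ++ c by [].
by rewrite rho_win.
Qed.

Lemma rho_red2 n' i : forall j (c : seq 'I_n'.+1),
  rho (wpow [:: L n' 0] i ++ wpow (run n' 1 n') j ++ c)
  = rho (wpow [:: L n' 0] (i - minn i j) ++ wpow (run n' 1 n') (j - minn i j) ++ c).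
Proof.
elim: i => [|i IH] [|j] c //.
by rewrite rho_red IH minnSS !subSS.
Qed.

Definition pf (i : nat) (e : bool) (j : nat) := if e then i - minn i j else i.
Definition qf (i : nat) (e : bool) (j : nat) := if e then j - minn i j else j.
Definition kf (i : nat) (e : bool) (j : nat) := if e then (minn i j).+1 else 0.

Lemma rho_nf n' i e j (b : seq 'I_n'.+1) : 1 <= n' -> nf_ok i e j b ->
  rho (nf i e j b) = wpow [:: L n' 0] (pf i e j) ++ wpow (run n' 1 n') (qf i e j) ++ b.
Proof.
move=> h1 [hb1 [hb2 hc]].
have g1 := nfb_hne hb1; have g2 := nfb_take hb2; have g3 := nfb_rho hb1.
rewrite /nf /pf /qf wa1E wtailE; case: e hc => hc.
  rewrite wfullE rho_win rho_red2 N2 //.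
  by case: (leqP i j) => hij; [left|right]; apply: subnn.
rewrite cat0s N2 //.
case: j hc => [|j] hc; first by right.
by case: (hc isT) => // ->; left.
Qed.

Lemma size_nf n' i e j (b : seq 'I_n'.+1) :
  size (nf i e j b) = size (wpow [:: L n' 0] (pf i e j) ++ wpow (run n' 1 n') (qf i e j) ++ b)
                      + kf i e j * n'.+1.
Proof.
rewrite /nf /pf /qf /kf wa1E wtailE; case: e; last by rewrite mul0n addn0.
rewrite wfullE !size_cat !size_wpow !size_run /=.
move: (minn i j) (geq_minl i j) (geq_minr i j) => m hi hj.
move: (i - m) (j - m) (subnKC hi) (subnKC hj) => i0 j0 <- <-.
rewrite -!plusE -!multE; lia.
Qed.

Lemma uniq_part n' i e j (b : seq 'I_n'.+1) i' e' j' b' : 1 <= n' ->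
  nf_ok i e j b -> nf_ok i' e' j' b' -> Seq (nf i e j b) (nf i' e' j' b') ->
  [/\ i = i', e = e', j = j' & b = b'].
Proof.
move=> h1 hok hok' H.
have Hr := Seq_rho H; have Hs := Seq_size H.
rewrite (rho_nf h1 hok) (rho_nf h1 hok') in Hr.
case: hok => [hb1 [hb2 hc]]; case: hok' => [hb1' [hb2' hc']].
have [Ep E2] := UA (hne_T _ h1 (nfb_hne hb1)) (hne_T _ h1 (nfb_hne hb1')) Hr.
have [Eq Eb] := UT (nfb_take hb2) (nfb_take hb2') E2.
rewrite !size_nf Hr in Hs; move/addnI: Hs => Hs.
move/eqP: Hs; rewrite eqn_pmul2r // => /eqP Ek.
clear H Hr E2; rewrite Eb; move: Ep Eq Ek; rewrite /pf /qf /kf.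
case: e hc => hc; case: e' hc' => hc' //= Ep Eq [Em].
have h5 := subnK (geq_minl i j); have h2 := subnK (geq_minr i j).
have h3 := subnK (geq_minl i' j'); have h4 := subnK (geq_minr i' j').
split => //; first by rewrite -h5 -h3 Ep Em.
by rewrite -h2 -h4 Eq Em.
Qed.

Lemma Seq_TA n' (v : seq 'I_n'.+1) :
  Seq (wtail n'.+1 ++ wa1 n'.+1 ++ v) (wa1 n'.+1 ++ wtail n'.+1 ++ v).
Proof.
have E : wtail n'.+1 ++ wa1 n'.+1 = run n' 1 n'.+1.
  transitivity (run n' 1 (n' + 1)); last by rewrite addn1.
  rewrite wtailE wa1E run_add /= add1n.
  by rewrite (@L_eq n' n'.+1 0) // modnn mod0n.
rewrite catA E [in X in Seq _ X]catA -wfull_cat.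
by have := Seq_win [::] 1 v.
Qed.

Lemma Seq_TAp n' i (v : seq 'I_n'.+1) :
  Seq (wtail n'.+1 ++ wpow (wa1 n'.+1) i ++ v) (wpow (wa1 n'.+1) i ++ wtail n'.+1 ++ v).
Proof.
elim: i v => [|i IH] v; first exact: Seq_refl.
rewrite wpowS -!catA.
apply: Seq_trans (Seq_TA _) _.
by have := Seq_ctx (wa1 n'.+1) [::] (IH v); rewrite !cats0.
Qed.

Lemma exist_part n' (h1 : 1 <= n') : forall k (a : seq 'I_n'.+1), size a < k ->
  exists i e j b, nf_ok i e j b /\ Seq a (nf i e j b).
Proof.
elim=> [//|k IH] a ha.
case: (classic (in_rideal (wa1 n'.+1) a)) => [[w Hw]|H1].
  have hw : size w < k.
    by move: ha; rewrite (Seq_size Hw) size_cat wa1E.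
  have [i [e [j [b [[hb1 [hb2 hc]] Hw']]]]] := IH w hw.
  have Ha : Seq a (wa1 n'.+1 ++ nf i e j b).
    apply: Seq_trans Hw _.
    by have := Seq_ctx (wa1 n'.+1) [::] Hw'; rewrite !cats0.
  clear Hw'; case: e hc Ha => [|] hc Ha.
    exists i.+1, true, j, b; split; first by split => //; split => // _; left.
    by move: Ha; rewrite /nf wpowS -!catA.
  case: j hc Ha => [|j] hc Ha.
    exists i.+1, false, 0, b; split; first by split => //; split.
    by move: Ha; rewrite /nf wpowS -!catA.
  have i0 : i = 0 by case: (hc isT).
  exists 0, true, j, b; split; first by split => //; split => // _; left.
  by move: Ha; rewrite /nf i0 wpowS wfull_cat /= -!catA.
case: (classic (in_rideal (wtail n'.+1) a)) => [[w Hw]|H2]; last first.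
  exists 0, false, 0, a; split; first by split => //; split.
  exact: Seq_refl.
have hw : size w < k.
  move: ha; rewrite (Seq_size Hw) size_cat wtailE size_run.
  move: h1 => /leP h1' /ltP H; apply/ltP; rewrite -plusE in H; lia.
have [i [e [j [b [[hb1 [hb2 hc]] Hw']]]]] := IH w hw.
have Ha : Seq a (wpow (wa1 n'.+1) i ++ (if e then wfull n'.+1 else [::]) ++ wpow (wtail n'.+1) j.+1 ++ b).
  have Hb : Seq (wtail n'.+1 ++ w) (wtail n'.+1 ++ nf i e j b).
    by have := Seq_ctx (wtail n'.+1) [::] Hw'; rewrite !cats0.
  apply: Seq_trans (Seq_trans Hw Hb) _.
  rewrite /nf; apply: Seq_trans (@Seq_TAp n' i _) _.
  have Hc : Seq (wtail n'.+1 ++ (if e then wfull n'.+1 else [::]) ++ wpow (wtail n'.+1) j ++ b) ((if e then wfull n'.+1 else [::]) ++ wpow (wtail n'.+1) j.+1 ++ b).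
    case: e {hc Hb Hw'} => /=; last by rewrite wpowS -catA; apply: Seq_refl.
    have := Seq_central2 (wtail n'.+1) (wpow (wtail n'.+1) j ++ b).
    by rewrite wpowS -!catA.
  by have := Seq_ctx (wpow (wa1 n'.+1) i) [::] Hc; rewrite !cats0.
clear Hw'; case: e hc Ha => [|] hc Ha.
  exists i, true, j.+1, b; split; first by split => //; split => // _; left.
  exact: Ha.
case: i hc Ha => [|i] hc Ha.
  exists 0, false, j.+1, b; split; first by split => //; split => // _; right.
  exact: Ha.
exists i, true, j, b; split; first by split => //; split => // _; left.
move: Ha; rewrite /nf wpowSr wpowS wfull_cat /= -!catA.
done.
Qed.

Theorem theorem2p1 (n : nat) (hn : 3 <= n) (a : seq 'I_n) :
  (exists (i : nat) (e : bool) (j : nat) (b : seq 'I_n),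
      nf_ok i e j b /\ Seq a (nf i e j b)) /\
  (forall (i : nat) (e : bool) (j : nat) (b : seq 'I_n)
          (i' : nat) (e' : bool) (j' : nat) (b' : seq 'I_n),
      nf_ok i e j b -> nf_ok i' e' j' b' ->
      Seq a (nf i e j b) -> Seq a (nf i' e' j' b') ->
      [/\ i = i', e = e', j = j' & Seq b b']).
Proof.
case: n hn a => [//|n'] hn a.
have h1 : 1 <= n' by move/leP: hn => hn'; apply/leP; lia.
split; first exact: (exist_part h1 (ltnSn (size a))).
move=> i e j b i' e' j' b' hok hok' Ha Ha'.
have [-> -> -> ->] := uniq_part h1 hok hok' (Seq_trans (Seq_sym Ha) Ha').
by split => //; apply: Seq_refl.
Qed.
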